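(* Let $X$ be a Tychonoff space. The following are equivalent: (1) $C_k(X)$ is strictly H-bounded; (2) $C_k(X)$ is H-bounded; (3) $C_k(X)$ is strictly M-bounded; (4) $C_k(X)$ is M-bounded; (5) $X$ is pseudocompact and every compact subset of $X$ is finite.
   Context: $C(X)$ is the set of continuous real-valued functions on $X$, a topological group under pointwise addition with identity the zero function. $C_k(X)$ is $C(X)$ with the compact-open topology (basic neighborhoods of $f$: $\{g:|g(x)-f(x)|<\varepsilon\ \forall x\in K\}$, $K$ compact, $\varepsilon>0$). For a topological group $G$ with identity $e$: $G$ is M-bounded if for every sequence $(U_n)$ of neighborhoods of $e$ there are finite $A_n\subset G$ with $G=\bigcup_n A_nU_n$; H-bounded if for every such sequence there are finite $A_n$ with each $x\in G$ in all but finitely many $A_nU_n$. In the M-game, in round $n$ ONE chooses a neighborhood $U_n$ of $e$ and TWO a finite $A_n\subset G$; TWO wins if $G=\bigcup_nA_nU_n$; $G$ is strictly M-bounded if TWO has a winning strategy. Strictly H-bounded: same game, TWO wins if each $x\in G$ lies in all but finitely many $A_nU_n$, and TWO has a winning strategy. *)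

(* Defs.v *)
From Stdlib Require Import Reals List.
Open Scope R_scope.

Definition is_topology {X : Type} (T : (X -> Prop) -> Prop) : Prop :=
  T (fun _ => True) /\
  (forall U V, T U -> T V -> T (fun x => U x /\ V x)) /\
  (forall F : (X -> Prop) -> Prop, (forall U, F U -> T U) ->
      T (fun x => exists U, F U /\ U x)).

Definition closedX {X : Type} (T : (X -> Prop) -> Prop) (F : X -> Prop) : Prop :=
  T (fun x => ~ F x).

Definition continuousX {X : Type} (T : (X -> Prop) -> Prop) (f : X -> R) : Prop :=
  forall x eps, 0 < eps ->
    exists V, T V /\ V x /\ forall y, V y -> Rabs (f y - f x) < eps.

Definition tychonoff {X : Type} (T : (X -> Prop) -> Prop) : Prop :=
  (forall x : X, closedX T (fun y => y = x)) /\
  (forall (F : X -> Prop) (x : X), closedX T F -> ~ F x ->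
     exists f : X -> R, continuousX T f /\ f x = 0 /\
       (forall y, F y -> f y = 1) /\ (forall y, 0 <= f y <= 1)).

Definition compact_set {X : Type} (T : (X -> Prop) -> Prop) (K : X -> Prop) : Prop :=
  forall Cov : (X -> Prop) -> Prop,
    (forall V, Cov V -> T V) ->
    (forall x, K x -> exists V, Cov V /\ V x) ->
    exists l : list (X -> Prop),
      (forall V, In V l -> Cov V) /\ (forall x, K x -> exists V, In V l /\ V x).

Definition finite_set {X : Type} (K : X -> Prop) : Prop :=
  exists l : list X, forall x, K x -> In x l.

Definition pseudocompact {X : Type} (T : (X -> Prop) -> Prop) : Prop :=
  forall f : X -> R, continuousX T f -> exists M, forall x, Rabs (f x) <= M.

Definition CX {X : Type} (T : (X -> Prop) -> Prop) : Type :=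
  { f : X -> R | continuousX T f }.

(* W is a neighbourhood of the zero function in C_k(X): it contains a basic
   neighbourhood {g : |g x| < eps for all x in K}, K compact, eps > 0. *)
Definition nbhd0 {X : Type} (T : (X -> Prop) -> Prop) (W : CX T -> Prop) : Prop :=
  exists K : X -> Prop, compact_set T K /\ exists eps, 0 < eps /\
    forall g : CX T, (forall x, K x -> Rabs (proj1_sig g x) < eps) -> W g.

Definition in_AU {X : Type} (T : (X -> Prop) -> Prop)
    (A : list (CX T)) (U : CX T -> Prop) (g : CX T) : Prop :=
  exists a u, In a A /\ U u /\
    forall x, proj1_sig g x = proj1_sig a x + proj1_sig u x.

Definition M_bounded {X : Type} (T : (X -> Prop) -> Prop) : Prop :=
  forall U : nat -> (CX T -> Prop), (forall n, nbhd0 T (U n)) ->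
    exists A : nat -> list (CX T), forall g, exists n, in_AU T (A n) (U n) g.

Definition H_bounded {X : Type} (T : (X -> Prop) -> Prop) : Prop :=
  forall U : nat -> (CX T -> Prop), (forall n, nbhd0 T (U n)) ->
    exists A : nat -> list (CX T), forall g, exists N, forall n, (N <= n)%nat ->
      in_AU T (A n) (U n) g.

(* Strategies for TWO: in round n, TWO sees ONE's moves U_0,...,U_n
   (perfect information; TWO's own earlier moves are determined by sigma). *)
Definition strategy {X : Type} (T : (X -> Prop) -> Prop) : Type :=
  list (CX T -> Prop) -> list (CX T).

Definition history {X : Type} (T : (X -> Prop) -> Prop)
    (U : nat -> (CX T -> Prop)) (n : nat) : list (CX T -> Prop) :=
  map U (seq 0 (S n)).

Definition strictly_M_bounded {X : Type} (T : (X -> Prop) -> Prop) : Prop :=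
  exists sigma : strategy T,
    forall U : nat -> (CX T -> Prop), (forall n, nbhd0 T (U n)) ->
      forall g, exists n, in_AU T (sigma (history T U n)) (U n) g.

Definition strictly_H_bounded {X : Type} (T : (X -> Prop) -> Prop) : Prop :=
  exists sigma : strategy T,
    forall U : nat -> (CX T -> Prop), (forall n, nbhd0 T (U n)) ->
      forall g, exists N, forall n, (N <= n)%nat ->
        in_AU T (sigma (history T U n)) (U n) g.

(* Main.v *)
Require Import Defs.
From Stdlib Require Import Reals List Lra Lia Classical ClassicalEpsilon FunctionalExtensionality PropExtensionality.
Open Scope R_scope.

Lemma T_ext {X : Type} (T : (X -> Prop) -> Prop) (U V : X -> Prop) :
  (forall x, U x <-> V x) -> T U -> T V.
Proof.
  intros H HU. assert (E : U = V).
  { apply functional_extensionality; intro x; apply propositional_extensionality; auto. }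
  subst; auto.
Qed.

Lemma cont_ext {X : Type} (T : (X -> Prop) -> Prop) (f g : X -> R) :
  (forall x, f x = g x) -> continuousX T f -> continuousX T g.
Proof.
  intros H Hf x eps He. destruct (Hf x eps He) as [V [HV [Vx HVy]]].
  exists V; split; [auto|split;[auto|]]. intros y Vy. rewrite <- !H. auto.
Qed.

Lemma cont_const {X : Type} (T : (X -> Prop) -> Prop) (HT : is_topology T) (c : R) :
  continuousX T (fun _ => c).
Proof.
  intros x eps He. exists (fun _ => True). destruct HT as [H1 _].
  split; [auto|split;[auto|]]. intros. rewrite Rminus_diag, Rabs_R0; auto.
Qed.

Lemma cont_lip2 {X : Type} (T : (X -> Prop) -> Prop) (HT : is_topology T)
  (f1 f2 : X -> R) (phi : R -> R -> R) (C : R) : 0 <= C ->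
  (forall a b c d, Rabs (phi a b - phi c d) <= C * (Rabs (a - c) + Rabs (b - d))) ->
  continuousX T f1 -> continuousX T f2 -> continuousX T (fun x => phi (f1 x) (f2 x)).
Proof.
  intros HC Hphi H1 H2 x eps He.
  set (e := eps / (2 * (C + 1))).
  assert (He' : 0 < e) by (unfold e; apply Rdiv_lt_0_compat; lra).
  destruct (H1 x e He') as [V1 [HV1 [V1x HV1y]]].
  destruct (H2 x e He') as [V2 [HV2 [V2x HV2y]]].
  exists (fun y => V1 y /\ V2 y). destruct HT as [_ [HI _]].
  split; [auto|split;[auto|]]. intros y [Y1 Y2].
  specialize (HV1y y Y1). specialize (HV2y y Y2).
  eapply Rle_lt_trans; [apply Hphi|].
  assert (E : C * (2 * e) < eps).
  { unfold e. replace (C * (2 * (eps / (2 * (C + 1))))) with (eps * (C / (C+1))) by (field; lra).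
    assert (C / (C+1) < 1). { apply (Rmult_lt_reg_r (C+1)); [lra|]. unfold Rdiv. rewrite Rmult_assoc, Rinv_l; lra. }
    nra. }
  nra.
Qed.

Lemma cont_affine {X : Type} (T : (X -> Prop) -> Prop) (HT : is_topology T)
  (f1 f2 : X -> R) (s : R) :
  continuousX T f1 -> continuousX T f2 -> continuousX T (fun x => f1 x + s * f2 x).
Proof.
  intros H1 H2. apply (cont_lip2 T HT f1 f2 (fun a b => a + s * b) (1 + Rabs s)); auto.
  - pose proof (Rabs_pos s); lra.
  - intros a b c d. replace (a + s * b - (c + s * d)) with ((a - c) + s * (b - d)) by ring.
    eapply Rle_trans; [apply Rabs_triang|]. rewrite Rabs_mult.
    pose proof (Rabs_pos s); pose proof (Rabs_pos (a-c)); pose proof (Rabs_pos (b-d)). nra.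
Qed.

Lemma Rmax_lip a b c d : Rabs (Rmax a b - Rmax c d) <= 1 * (Rabs (a - c) + Rabs (b - d)).
Proof.
  unfold Rmax; destruct (Rle_dec a b), (Rle_dec c d);
  unfold Rabs; repeat destruct Rcase_abs; lra.
Qed.

Lemma Rmin_lip a b c d : Rabs (Rmin a b - Rmin c d) <= 1 * (Rabs (a - c) + Rabs (b - d)).
Proof.
  unfold Rmin; destruct (Rle_dec a b), (Rle_dec c d);
  unfold Rabs; repeat destruct Rcase_abs; lra.
Qed.

Lemma cont_max {X : Type} (T : (X -> Prop) -> Prop) (HT : is_topology T) (f1 f2 : X -> R) :
  continuousX T f1 -> continuousX T f2 -> continuousX T (fun x => Rmax (f1 x) (f2 x)).
Proof. intros; apply (cont_lip2 T HT f1 f2 Rmax 1); auto; [lra|apply Rmax_lip]. Qed.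

Lemma cont_min {X : Type} (T : (X -> Prop) -> Prop) (HT : is_topology T) (f1 f2 : X -> R) :
  continuousX T f1 -> continuousX T f2 -> continuousX T (fun x => Rmin (f1 x) (f2 x)).
Proof. intros; apply (cont_lip2 T HT f1 f2 Rmin 1); auto; [lra|apply Rmin_lip]. Qed.

Lemma cont_posabs {X : Type} (T : (X -> Prop) -> Prop) (HT : is_topology T) (f : X -> R) (k : R) :
  continuousX T f -> continuousX T (fun x => Rmax 0 (Rabs (f x) - k)).
Proof.
  intros H. apply (cont_lip2 T HT f f (fun a _ => Rmax 0 (Rabs a - k)) 1); auto; [lra|].
  intros a b c d. pose proof (Rabs_pos (b - d)).
  pose proof (Rabs_triang_inv a c). pose proof (Rabs_triang_inv c a).
  rewrite (Rabs_minus_sym c a) in *.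
  unfold Rmax at 1 2; destruct (Rle_dec 0 (Rabs a - k)), (Rle_dec 0 (Rabs c - k));
  unfold Rabs at 1; destruct Rcase_abs; lra.
Qed.

Lemma closed_finite {X : Type} (T : (X -> Prop) -> Prop) (HT : is_topology T) (HX : tychonoff T)
  (L : list X) : closedX T (fun y => In y L).
Proof.
  induction L as [|z L IH]; unfold closedX in *.
  - apply (T_ext T (fun _ => True)); [simpl; tauto| apply HT].
  - destruct HX as [H1 _]. specialize (H1 z). unfold closedX in H1.
    apply (T_ext T (fun x => ~ x = z /\ ~ In x L)).
    + intros x; simpl. split; [intros [A B] [C|C]; [apply A; auto|auto]|].
      intros H; split; intro; apply H; auto.
    + apply HT; auto.
Qed.

Lemma interp {X : Type} (T : (X -> Prop) -> Prop) (HT : is_topology T) (HX : tychonoff T)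
  (L : list X) (x : X) : ~ In x L ->
  exists f, continuousX T f /\ f x = 1 /\ (forall y, In y L -> f y = 0) /\ (forall y, 0 <= f y <= 1).
Proof.
  intros Hx. destruct HX as [H1 H2] eqn:E.
  destruct (H2 (fun y => In y L) x (closed_finite T HT HX L) Hx) as [f0 [Hc [A [B C]]]].
  exists (fun y => 1 + (-1) * f0 y). split.
  - apply cont_affine; auto. apply cont_const; auto.
  - split; [rewrite A; ring|split].
    + intros y Hy; rewrite B; auto; ring.
    + intros y; specialize (C y); lra.
Qed.


Lemma grid_aux (a eps : R) : 0 < eps -> forall N : nat, exists G : list R,
  forall r, a <= r <= a + INR N * eps -> exists v, In v G /\ Rabs (r - v) < eps.
Proof.
  intros He N. induction N as [|N [G HG]].
  - exists (a :: nil). intros r Hr. exists a. split; [left; auto|]. simpl in Hr.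
    replace (r - a) with 0 by lra. rewrite Rabs_R0; auto.
  - exists ((a + INR (S N) * eps) :: G). intros r Hr.
    destruct (Rle_dec r (a + INR N * eps)).
    + destruct (HG r) as [v [Hv1 Hv2]]; [lra|]. exists v; split; [right|]; auto.
    + exists (a + INR (S N) * eps); split; [left; auto|]. rewrite S_INR in *.
      unfold Rabs; destruct Rcase_abs; lra.
Qed.

Lemma grid (R0 eps : R) : 0 < eps -> exists G : list R,
  forall r, Rabs r <= R0 -> exists v, In v G /\ Rabs (r - v) < eps.
Proof.
  intros He. destruct (INR_unbounded (2 * Rabs R0 / eps)) as [N HN].
  destruct (grid_aux (- Rabs R0) eps He N) as [G HG]. exists G. intros r Hr.
  apply HG. assert (INR N * eps > 2 * Rabs R0).
  { apply (Rmult_gt_compat_r eps) in HN; auto.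
    replace (2 * Rabs R0 / eps * eps) with (2 * Rabs R0) in HN by (field; lra). lra. }
  pose proof (Rle_abs r). pose proof (Rle_abs (-r)). rewrite Rabs_Ropp in *.
  pose proof (Rabs_pos R0). pose proof (Rle_abs R0). lra.
Qed.

Definition czero {X : Type} (T : (X -> Prop) -> Prop) (HT : is_topology T) : CX T :=
  exist _ (fun _ => 0) (cont_const T HT 0).

Lemma approx {X : Type} (T : (X -> Prop) -> Prop) (HT : is_topology T) (HX : tychonoff T)
  (eps R0 : R) : 0 < eps -> forall L : list X, exists A : list (CX T),
  forall g : CX T, (forall x, Rabs (proj1_sig g x) <= R0) ->
    exists a, In a A /\ forall x, In x L -> Rabs (proj1_sig g x - proj1_sig a x) < eps.
Proof.
  intros He L. induction L as [|y L [A' HA']].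
  - exists (czero T HT :: nil). intros g _. exists (czero T HT). split; [left; auto|].
    intros x [].
  - destruct (classic (In y L)) as [Hy|Hy].
    + exists A'. intros g Hg. destruct (HA' g Hg) as [a [Ha1 Ha2]]. exists a; split; auto.
      intros x [<-|Hx]; auto.
    + destruct (interp T HT HX L y Hy) as [f [Hf [Hf1 [Hf0 _]]]].
      destruct (grid R0 eps He) as [G HG].
      set (mk := fun (a' : CX T) (v : R) => exist (continuousX T)
          (fun z => proj1_sig a' z + (v - proj1_sig a' y) * f z)
          (cont_affine T HT _ _ _ (proj2_sig a') Hf)).
      exists (flat_map (fun a' => map (fun v => mk a' v) G) A').
      intros g Hg. destruct (HA' g Hg) as [a' [Ha1 Ha2]].
      destruct (HG (proj1_sig g y) (Hg y)) as [v [Hv1 Hv2]].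
      exists (mk a' v). split.
      * apply in_flat_map. exists a'; split; auto. apply in_map; auto.
      * intros x [<-|Hx]; simpl.
        -- rewrite Hf1. replace (proj1_sig a' y + (v - proj1_sig a' y) * 1) with v by ring. auto.
        -- rewrite (Hf0 x Hx). replace (proj1_sig a' x + (v - proj1_sig a' y) * 0) with (proj1_sig a' x) by ring.
           auto.
Qed.

Definition csub {X : Type} (T : (X -> Prop) -> Prop) (HT : is_topology T) (g a : CX T) : CX T :=
  exist _ (fun z => proj1_sig g z + (-1) * proj1_sig a z)
    (cont_affine T HT _ _ _ (proj2_sig g) (proj2_sig a)).

Lemma history_len {X : Type} (T : (X -> Prop) -> Prop) U n : length (history T U n) = S n.
Proof. unfold history. rewrite length_map, length_seq. auto. Qed.

Lemma history_last {X : Type} (T : (X -> Prop) -> Prop) U n d : last (history T U n) d = U n.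
Proof. unfold history. rewrite seq_S, map_app. simpl. rewrite last_last. auto. Qed.

Lemma partA {X : Type} (T : (X -> Prop) -> Prop) (HT : is_topology T) (HX : tychonoff T) :
  pseudocompact T -> (forall K : X -> Prop, compact_set T K -> finite_set K) ->
  strictly_H_bounded T.
Proof.
  intros Hps Hfin.
  set (P := fun (l : list (CX T -> Prop)) (A : list (CX T)) => forall g : CX T,
     (forall x, Rabs (proj1_sig g x) <= INR (length l)) -> in_AU T A (last l (fun _ => True)) g).
  exists (fun l => match excluded_middle_informative (exists A, P l A) with
          | left H => proj1_sig (constructive_indefinite_description _ H)
          | right _ => nil end).
  intros U HU g.
  assert (Hex : forall n, exists A, P (history T U n) A).
  { intros n. destruct (HU n) as [K [HK [eps [He HKe]]]].
    destruct (Hfin K HK) as [L HL].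
    destruct (approx T HT HX eps (INR (S n)) He L) as [A HA].
    exists A. intros h Hh. rewrite history_len in Hh. rewrite history_last.
    destruct (HA h Hh) as [a [Ha1 Ha2]].
    exists a, (csub T HT h a). split; [auto|split].
    - apply HKe. intros x Kx. simpl. replace (proj1_sig h x + -1 * proj1_sig a x) with
        (proj1_sig h x - proj1_sig a x) by ring. auto.
    - intros x; simpl; ring. }
  destruct (Hps (proj1_sig g) (proj2_sig g)) as [M HM].
  destruct (INR_unbounded M) as [N HN]. exists N. intros n Hn.
  destruct (excluded_middle_informative (exists A, P (history T U n) A)) as [H|H];
    [|exfalso; auto].
  destruct (constructive_indefinite_description _ H) as [A HA]. simpl.
  rewrite <- (history_last T U n (fun _ => True)). apply HA.
  intros x. rewrite history_len. eapply Rle_trans; [apply HM|].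
  apply le_INR in Hn. rewrite S_INR. lra.
Qed.


Fixpoint Fs {X : Type} (c : nat -> R) (h : X -> R) (n : nat) (x : X) : R :=
  match n with
  | O => 0
  | S k => Fs c h k x + c k * Rmax 0 (Rabs (h x) - INR k)
  end.

Lemma Fs_cont {X : Type} (T : (X -> Prop) -> Prop) (HT : is_topology T) c h n :
  continuousX T h -> continuousX T (Fs c h n).
Proof.
  intros Hh. induction n; simpl.
  - apply cont_const; auto.
  - apply (cont_affine T HT (Fs c h n) (fun x => Rmax 0 (Rabs (h x) - INR n)) (c n)); auto.
    apply cont_posabs; auto.
Qed.

Lemma Fs_stable {X : Type} c (h : X -> R) x N : Rabs (h x) <= INR N ->
  forall m, Fs c h (N + m) x = Fs c h N x.
Proof.
  intros HN m. induction m.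
  - rewrite Nat.add_0_r; auto.
  - rewrite Nat.add_succ_r. simpl. rewrite IHm.
    assert (INR N <= INR (N + m)) by (apply le_INR; lia).
    rewrite Rmax_left; [ring|lra].
Qed.

Lemma Fs_eq {X : Type} c (h : X -> R) x N1 N2 : Rabs (h x) <= INR N1 -> Rabs (h x) <= INR N2 ->
  Fs c h N1 x = Fs c h N2 x.
Proof.
  intros H1 H2. destruct (Nat.le_ge_cases N1 N2).
  - replace N2 with (N1 + (N2 - N1))%nat by lia. symmetry; apply Fs_stable; auto.
  - replace N1 with (N2 + (N1 - N2))%nat by lia. apply Fs_stable; auto.
Qed.

Lemma Fs_lower {X : Type} c (h : X -> R) x : (forall k, 0 <= c k) ->
  forall n, 0 <= Fs c h n x /\ forall k, (k < n)%nat -> c k * Rmax 0 (Rabs (h x) - INR k) <= Fs c h n x.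
Proof.
  intros Hc n. induction n as [|n [IH1 IH2]].
  - split; simpl; [lra|intros; lia].
  - assert (0 <= c n * Rmax 0 (Rabs (h x) - INR n)).
    { apply Rmult_le_pos; auto. apply Rmax_l. }
    simpl. split; [lra|]. intros k Hk. destruct (Nat.eq_dec k n) as [->|Hne]; [lra|].
    assert (c k * Rmax 0 (Rabs (h x) - INR k) <= Fs c h n x) by (apply IH2; lia). lra.
Qed.

Lemma nat_above (r : R) : exists N : nat, r <= INR N.
Proof. destruct (INR_unbounded r) as [N HN]. exists N; lra. Qed.

Fixpoint sumabs {X : Type} {T : (X -> Prop) -> Prop} (A : list (CX T)) (x : X) : R :=
  match A with nil => 0 | a :: A' => Rabs (proj1_sig a x) + sumabs A' x end.

Lemma sumabs_prop {X : Type} {T : (X -> Prop) -> Prop} (A : list (CX T)) x :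
  0 <= sumabs A x /\ forall a, In a A -> Rabs (proj1_sig a x) <= sumabs A x.
Proof.
  induction A as [|b A [IH1 IH2]]; simpl.
  - split; [lra| intros _ []].
  - pose proof (Rabs_pos (proj1_sig b x)). split; [lra|].
    intros a [<-|Ha]; [lra|]. specialize (IH2 a Ha). lra.
Qed.

Lemma single_compact {X : Type} (T : (X -> Prop) -> Prop) (z : X) : compact_set T (fun y => y = z).
Proof.
  intros Cov _ Hc. destruct (Hc z eq_refl) as [V [HV Vz]]. exists (V :: nil). split.
  - intros W [<-|[]]; auto.
  - intros x ->. exists V; split; [left|]; auto.
Qed.

Lemma partB1 {X : Type} (T : (X -> Prop) -> Prop) (HT : is_topology T) :
  M_bounded T -> pseudocompact T.
Proof.
  intros HM f Hf. apply NNPP. intros Hno.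
  assert (Hun : forall M, exists x, M < Rabs (f x)).
  { intros M. apply NNPP; intros H. apply Hno. exists M. intros x.
    apply Rnot_lt_le. intro; apply H; eauto. }
  set (xs := fun n : nat => proj1_sig (constructive_indefinite_description _ (Hun (INR n + 1)))).
  assert (Hxs : forall n, INR n + 1 < Rabs (f (xs n))).
  { intros n. unfold xs. destruct (constructive_indefinite_description _ _); auto. }
  set (U := fun (n : nat) (h : CX T) => Rabs (proj1_sig h (xs n)) < 1).
  destruct (HM U) as [A HA].
  { intros n. exists (fun y => y = xs n). split; [apply single_compact|].
    exists 1. split; [lra|]. intros g Hg. apply Hg; auto. }
  set (c := fun n => 1 + sumabs (A n) (xs n)).
  assert (Hc : forall k, 0 <= c k).
  { intros k. unfold c. destruct (sumabs_prop (A k) (xs k)). lra. }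
  set (cut := fun x => proj1_sig (constructive_indefinite_description _ (nat_above (Rabs (f x))))).
  assert (Hcut : forall x, Rabs (f x) <= INR (cut x)).
  { intros x; unfold cut; destruct (constructive_indefinite_description _ _); auto. }
  set (g := fun x => Fs c f (cut x) x).
  assert (Hg : continuousX T g).
  { intros x0 eps He. destruct (nat_above (Rabs (f x0) + 1)) as [N HN].
    destruct (Hf x0 1 Rlt_0_1) as [V1 [HV1 [V1x HV1y]]].
    destruct (Fs_cont T HT c f N Hf x0 eps He) as [V2 [HV2 [V2x HV2y]]].
    exists (fun y => V1 y /\ V2 y). split; [apply HT; auto|split; [auto|]].
    intros y [Y1 Y2]. unfold g.
    assert (Rabs (f y) <= INR N).
    { specialize (HV1y y Y1). pose proof (Rabs_triang_inv (f y) (f x0)). lra. }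
    rewrite (Fs_eq c f y (cut y) N), (Fs_eq c f x0 (cut x0) N); auto; lra. }
  destruct (HA (exist _ g Hg)) as [n [a [u [Ha [Hu Hgau]]]]].
  specialize (Hgau (xs n)). simpl in Hgau. unfold U in Hu.
  set (N := max (S n) (cut (xs n))).
  assert (E : g (xs n) = Fs c f N (xs n)).
  { unfold g. apply Fs_eq; auto. eapply Rle_trans; [apply Hcut|]. apply le_INR; lia. }
  destruct (Fs_lower c f (xs n) Hc N) as [_ Hlow].
  specialize (Hlow n ltac:(lia)).
  assert (1 <= Rmax 0 (Rabs (f (xs n)) - INR n)).
  { specialize (Hxs n). eapply Rle_trans; [|apply Rmax_r]. lra. }
  assert (c n <= g (xs n)).
  { rewrite E. eapply Rle_trans; [|apply Hlow]. specialize (Hc n). nra. }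
  destruct (sumabs_prop (A n) (xs n)) as [_ Hs]. specialize (Hs a Ha).
  unfold c in *.
  pose proof (Rle_abs (proj1_sig a (xs n))). pose proof (Rle_abs (proj1_sig u (xs n))).
  lra.
Qed.


Lemma limit_lemma {X : Type} (T : (X -> Prop) -> Prop) (F : nat -> X -> R) :
  (forall n, continuousX T (F n)) ->
  (forall n x, F n x <= F (S n) x <= F n x + (/4)^n) ->
  exists g, continuousX T g /\ forall n x, F n x <= g x <= F n x + 4/3 * (/4)^n.
Proof.
  intros Hc Hs.
  assert (Hb : forall x n k, F (n + k)%nat x <= F n x + 4/3 * ((/4)^n - (/4)^(n+k))).
  { intros x n k. induction k.
    - rewrite Nat.add_0_r. lra.
    - rewrite Nat.add_succ_r. simpl. destruct (Hs (n+k)%nat x). lra. }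
  assert (Hgr : forall x, Un_growing (fun m => F m x)).
  { intros x m. destruct (Hs m x); auto. }
  assert (Hub : forall x, has_ub (fun m => F m x)).
  { intros x. exists (F 0%nat x + 4/3). intros y [i ->].
    specialize (Hb x 0%nat i). simpl in Hb. pose proof (pow_le (/4) i). lra. }
  set (g := fun x => proj1_sig (growing_cv _ (Hgr x) (Hub x))).
  assert (Hg : forall n x, F n x <= g x <= F n x + 4/3 * (/4)^n).
  { intros n x. unfold g. destruct (growing_cv _ _ _) as [l Hl]. simpl. split.
    - apply (growing_ineq _ l (Hgr x) Hl).
    - apply Rnot_lt_le. intros Hlt.
      destruct (Hl (l - (F n x + 4/3 * (/4)^n))) as [N HN]; [lra|].
      specialize (HN (n + N)%nat ltac:(lia)). specialize (Hb x n N).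
      pose proof (pow_le (/4) (n+N)). unfold R_dist in HN.
      pose proof (Rle_abs (F (n+N)%nat x - l)). pose proof (Rle_abs (-(F (n+N)%nat x - l))).
      rewrite Rabs_Ropp in *. lra. }
  exists g. split; auto.
  intros x0 eps He.
  destruct (pow_lt_1_zero (/4) ltac:(rewrite Rabs_right; lra) (eps / 4) ltac:(lra)) as [n Hn].
  specialize (Hn n (le_n n)). rewrite Rabs_right in Hn by (apply Rle_ge, pow_le; lra).
  destruct (Hc n x0 (eps / 4) ltac:(lra)) as [V [HV [Vx HVy]]].
  exists V. split; [auto|split; [auto|]]. intros y Vy. specialize (HVy y Vy).
  destruct (Hg n y). destruct (Hg n x0).
  pose proof (Rle_abs (F n y - F n x0)). pose proof (Rle_abs (-(F n y - F n x0))).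
  rewrite Rabs_Ropp in *.
  unfold Rabs at 1; destruct Rcase_abs; lra.
Qed.

Lemma step_lemma {X : Type} (T : (X -> Prop) -> Prop) (HT : is_topology T) (HX : tychonoff T)
  (K : X -> Prop) (t : R) : 0 < t -> (forall W : list X, exists x, K x /\ ~ In x W) ->
  forall (p : CX T) (B : list (CX T)), exists (q : CX T) (W : list X),
    (forall x, proj1_sig p x <= proj1_sig q x <= proj1_sig p x + t) /\
    forall a, In a B -> exists x, K x /\ In x W /\ Rabs (proj1_sig q x - proj1_sig a x) >= t / 2.
Proof.
  intros Ht Hinf p B. induction B as [|a B [q' [W' [Hq1 Hq2]]]].
  - exists p, nil. split; [intros; lra| intros a []].
  - destruct (Hinf W') as [x [Kx Hx]].
    destruct (interp T HT HX W' x Hx) as [f [Hf [Hf1 [Hf0 Hf01]]]].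
    destruct p as [p Hp]. destruct q' as [q' Hq']. simpl in *.
    destruct (Rge_dec (Rabs (p x + t - proj1_sig a x)) (t / 2)) as [Hge|Hlt].
    + exists (exist _ (fun z => Rmax (q' z) (p z + t * f z))
               (cont_max T HT _ _ Hq' (cont_affine T HT _ _ t Hp Hf))).
      exists (x :: W'). simpl. split.
      * intros z. specialize (Hq1 z). specialize (Hf01 z). split.
        -- eapply Rle_trans; [|apply Rmax_l]. lra.
        -- apply Rmax_lub; nra.
      * intros b [<-|Hb].
        -- exists x. split; [auto|split; [left; auto|]]. rewrite Hf1.
           rewrite Rmax_right; [|specialize (Hq1 x); lra]. rewrite Rmult_1_r. auto.
        -- destruct (Hq2 b Hb) as [y [Ky [Wy Hy]]]. exists y. split; [auto|split; [right; auto|]].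
           rewrite (Hf0 y Wy), Rmax_left; [auto|specialize (Hq1 y); lra].
    + assert (Hge : Rabs (p x - proj1_sig a x) >= t / 2).
      { apply Rnot_lt_ge. intro. apply Hlt.
        unfold Rabs in *; repeat destruct Rcase_abs; lra. }
      assert (Hpt : continuousX T (fun z => p z + t)).
      { apply (cont_ext T (fun z => p z + t * 1)); [intros; ring|].
        apply cont_affine; auto. apply cont_const; auto. }
      exists (exist _ (fun z => Rmin (q' z) ((p z + t) + (-t) * f z))
               (cont_min T HT _ _ Hq' (cont_affine T HT _ _ (-t) Hpt Hf))).
      exists (x :: W'). simpl. split.
      * intros z. specialize (Hq1 z). specialize (Hf01 z). split.
        -- apply Rmin_glb; nra.
        -- eapply Rle_trans; [apply Rmin_l|]. lra.
      * intros b [<-|Hb].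
        -- exists x. split; [auto|split; [left; auto|]]. rewrite Hf1.
           rewrite Rmin_right; [|specialize (Hq1 x); lra].
           replace (p x + t + - t * 1) with (p x) by ring. auto.
        -- destruct (Hq2 b Hb) as [y [Ky [Wy Hy]]]. exists y. split; [auto|split; [right; auto|]].
           rewrite (Hf0 y Wy), Rmin_left; [auto|specialize (Hq1 y); lra].
Qed.


Lemma partB2 {X : Type} (T : (X -> Prop) -> Prop) (HT : is_topology T) (HX : tychonoff T) :
  M_bounded T -> forall K : X -> Prop, compact_set T K -> finite_set K.
Proof.
  intros HM K HK. apply NNPP. intros Hnf.
  assert (Hinf : forall W : list X, exists x, K x /\ ~ In x W).
  { intros W. apply NNPP. intros H. apply Hnf. exists W. intros x Kx.
    apply NNPP. intro; apply H; eauto. }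
  set (t := fun n : nat => (/4)^n).
  assert (Ht : forall n, 0 < t n) by (intros; apply pow_lt; lra).
  set (U := fun (n : nat) (h : CX T) => forall x, K x -> Rabs (proj1_sig h x) < t n / 6).
  destruct (HM U) as [A HA].
  { intros n. exists K. split; auto. exists (t n / 6). split; [specialize (Ht n); lra|].
    intros g Hg; exact Hg. }
  assert (Hstep : forall n (p : CX T), exists q : CX T,
     (forall x, proj1_sig p x <= proj1_sig q x <= proj1_sig p x + t n) /\
     forall a, In a (A n) -> exists x, K x /\ Rabs (proj1_sig q x - proj1_sig a x) >= t n / 2).
  { intros n p. destruct (step_lemma T HT HX K (t n) (Ht n) Hinf p (A n)) as [q [W [H1 H2]]].
    exists q. split; auto. intros a Ha. destruct (H2 a Ha) as [x [Kx [_ Hx]]]. eauto. }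
  set (F := nat_rect (fun _ => CX T) (czero T HT)
              (fun n p => proj1_sig (constructive_indefinite_description _ (Hstep n p)))).
  assert (HF : forall n, (forall x, proj1_sig (F n) x <= proj1_sig (F (S n)) x <= proj1_sig (F n) x + t n) /\
     forall a, In a (A n) -> exists x, K x /\ Rabs (proj1_sig (F (S n)) x - proj1_sig a x) >= t n / 2).
  { intros n. simpl. destruct (constructive_indefinite_description _ _) as [q Hq]. simpl. auto. }
  destruct (limit_lemma T (fun n => proj1_sig (F n))) as [g [Hg Hgb]].
  { intros n; apply (proj2_sig (F n)). }
  { intros n x. apply (proj1 (HF n)). }
  destruct (HA (exist _ g Hg)) as [n [a [u [Ha [Hu Hgau]]]]].
  destruct (proj2 (HF n) a Ha) as [x [Kx Hx]].
  specialize (Hu x Kx). specialize (Hgau x). simpl in Hgau.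
  specialize (Hgb (S n) x). cbv beta in Hgb. rewrite <- tech_pow_Rmult in Hgb. fold (t n) in Hgb. specialize (Ht n).
  set (Q := proj1_sig (F (S n)) x) in *. clearbody Q.
  unfold Rabs in *; repeat destruct Rcase_abs; lra.
Qed.

Theorem theorem2p6 (X : Type) (T : (X -> Prop) -> Prop)
  (HT : is_topology T) (HX : tychonoff T) :
  (strictly_H_bounded T <-> H_bounded T) /\
  (H_bounded T <-> strictly_M_bounded T) /\
  (strictly_M_bounded T <-> M_bounded T) /\
  (M_bounded T <->
     (pseudocompact T /\ forall K : X -> Prop, compact_set T K -> finite_set K)).
Proof.
  assert (h1 : strictly_H_bounded T -> H_bounded T).
  { intros [s Hs] U HU. exists (fun n => s (history T U n)). intros g. apply Hs; auto. }
  assert (h2 : H_bounded T -> M_bounded T).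
  { intros H U HU. destruct (H U HU) as [A HA]. exists A. intros g.
    destruct (HA g) as [N HN]. exists N. apply HN; auto. }
  assert (h3 : M_bounded T -> pseudocompact T /\ forall K : X -> Prop, compact_set T K -> finite_set K).
  { intros H. split; [apply partB1|apply partB2]; auto. }
  assert (h4 : pseudocompact T /\ (forall K : X -> Prop, compact_set T K -> finite_set K) -> strictly_H_bounded T).
  { intros [H1 H2]. apply partA; auto. }
  assert (h5 : strictly_H_bounded T -> strictly_M_bounded T).
  { intros [s Hs]. exists s. intros U HU g. destruct (Hs U HU g) as [N HN]. exists N; apply HN; auto. }
  assert (h6 : strictly_M_bounded T -> M_bounded T).
  { intros [s Hs] U HU. exists (fun n => s (history T U n)). intros g. apply Hs; auto. }
  tauto.
Qed.
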